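(* Let $V$ be a set and $(\mathcal{H}_\ell)_{\ell\in\mathbb{Z}}$ a hypergraph chain over $V$ with Colorful Helly Number $k$. Let $S\subset V$ be a finite subset with $|S|=n$, where $n$ is sufficiently large (in terms of $k$). If for some $t\in\mathbb{Z}$ and $c\in(0,1)$ the inequality $\omega_k(\mathcal{H}_{t+1}|_S)\le cn/2$ holds, then for any $i\in\{1,\dots,k\}$ and any family $\mathcal{F}_i\subset\binom{S}{i}$ with $|\mathcal{F}_i|\ge c\binom{n}{i}$, there exist a family $\mathcal{F}_{i-1}\subset\binom{S}{i-1}$ and a set $M\in\binom{S}{k}\setminus\mathcal{H}_t$ such that $|\mathcal{F}_{i-1}|\ge\left(\frac{c}{12k^2}\right)^k\binom{n}{i-1}$ and $A\cup\{v\}\in\mathcal{F}_i$ for all $A\in\mathcal{F}_{i-1}$ and all $v\in M$.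
   Context: A hypergraph on $V$ is a family $\mathcal{H}\subset 2^V$; it is downwards closed if $H\in\mathcal{H}$, $G\subset H$ imply $G\in\mathcal{H}$. A hypergraph chain over $V$ is a sequence $(\mathcal{H}_\ell)_{\ell\in\mathbb{Z}}$ of downwards closed hypergraphs on $V$ with $\mathcal{H}_\ell\subset\mathcal{H}_{\ell+1}$. For $S_1,\dots,S_k\subset V$, $F\subset V$ is a colorful selection if there is a surjection $\phi:\{1,\dots,k\}\to F$ with $\phi(i)\in S_i$; these form $S_1\otimes\dots\otimes S_k$. The chain has Colorful Helly Number $k$ if for all finite $S_1,\dots,S_k\subset V$ and $\ell$ with $S_1\otimes\dots\otimes S_k\subset\mathcal{H}_\ell$, some $S_j\in\mathcal{H}_{\ell+1}$. $\binom{S}{i}$ denotes the set of $i$-element subsets of $S$. For a hypergraph $\mathcal{H}$ and finite $S$, $\omega_k(\mathcal{H}|_S)$ is the largest size of $K\subset S$ with $\binom{K}{k}\subset\mathcal{H}$. *)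

(* Defs.v *)
From HB Require Import structures.
From mathcomp Require Import all_boot all_order all_algebra.
From mathcomp Require Import finmap.
From mathcomp Require Import boolp.
Set Implicit Arguments. Unset Strict Implicit. Unset Printing Implicit Defensive.
Import Order.TTheory GRing.Theory Num.Theory.
Local Open Scope fset_scope.

(* A hypergraph on V is a family of finite subsets of V, given as a predicate.
   (Only finite hyperedges matter for all notions below.) *)
Definition hypergraph (V : choiceType) := {fset V} -> Prop.

Definition down_closed (V : choiceType) (H : hypergraph V) : Prop :=
  forall A B : {fset V}, B `<=` A -> H A -> H B.

Definition hyp_chain (V : choiceType) (H : int -> hypergraph V) : Prop :=
  (forall l, down_closed (H l)) /\ (forall l (A : {fset V}), H l A -> H (l + 1)%R A).

Definition colorful_sel (V : choiceType) (k : nat) (S : 'I_k -> {fset V})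
    (F : {fset V}) : Prop :=
  exists phi : 'I_k -> V,
    (forall i, phi i \in S i) /\ F = [fset phi i | i in 'I_k].

Definition colorful_helly (V : choiceType) (H : int -> hypergraph V) (k : nat) : Prop :=
  forall (S : 'I_k -> {fset V}) (l : int),
    (forall F, colorful_sel S F -> H l F) -> exists j : 'I_k, H (l + 1)%R (S j).

Definition in_binom (V : choiceType) (S : {fset V}) (i : nat) (A : {fset V}) : Prop :=
  A `<=` S /\ #|` A| = i.

Definition omega (V : choiceType) (k : nat) (H : hypergraph V) (S : {fset V}) : nat :=
  \max_(K <- fpowerset S | `[< forall A, in_binom K k A -> H A >]) #|` K|.

(* Main.v *)
Require Import Defs.
From HB Require Import structures.
From mathcomp Require Import all_boot all_order all_algebra.
From mathcomp Require Import finmap.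
From mathcomp Require Import boolp.
From mathcomp Require Import ring lra zify.
Import Order.TTheory GRing.Theory Num.Theory.
Set Implicit Arguments. Unset Strict Implicit.

Section FS.
Local Open Scope fset_scope.
Variables (V : choiceType) (S : {fset V}).

Definition fS (X : {set S}) : {fset V} := [fset val x | x in X].
Definition gS (B : {fset V}) : {set S} := [set x : S | val x \in B].

Lemma fS_val (X : {set S}) (x : S) : (val x \in fS X) = (x \in X).
Proof.
apply/imfsetP/idP => [[y yX /val_inj ->] //|xX]; by exists x.
Qed.

Lemma fS_in (X : {set S}) v : v \in fS X -> exists2 x : S, x \in X & v = val x.
Proof. by move/imfsetP => [x xX ->]; exists x. Qed.

Lemma fS_sub (X : {set S}) : fS X `<=` S.
Proof. by apply/fsubsetP => v /fS_in [x _ ->]; apply: valP. Qed.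

Lemma card_fS (X : {set S}) : #|` fS X| = #|X|.
Proof.
rewrite card_imfset; last exact: val_inj.
by rewrite cardE.
Qed.

Lemma fS_inj : injective fS.
Proof.
move=> X Y eXY; apply/setP => x; by rewrite -!fS_val eXY.
Qed.

Lemma fSgS (B : {fset V}) : B `<=` S -> fS (gS B) = B.
Proof.
move=> /fsubsetP BS; apply/fsetP => v; apply/idP/idP.
  by move/fS_in => [x]; rewrite inE => xB ->.
move=> vB; have vS := BS _ vB.
by rewrite -[v]/(val [` vS]) fS_val inE.
Qed.

Lemma fS_subset (X Y : {set S}) : (fS X `<=` fS Y) = (X \subset Y).
Proof.
apply/fsubsetP/subsetP => [h x xX|h v /fS_in [x xX ->]].
  by rewrite -fS_val; apply: h; rewrite fS_val.
by rewrite fS_val; apply: h.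
Qed.

Lemma gS_sub (B : {fset V}) (X : {set S}) : B `<=` fS X -> gS B \subset X.
Proof.
move=> /fsubsetP h; apply/subsetP => x; rewrite inE => /h.
by rewrite fS_val.
Qed.

Lemma card_gS (B : {fset V}) : B `<=` S -> #|gS B| = #|` B|.
Proof. by move=> BS; rewrite -card_fS fSgS. Qed.

Lemma fS_setU1 (x : S) (A : {set S}) : fS (x |: A) = fS A `|` [fset val x].
Proof.
apply/fsetP => v; rewrite in_fsetU in_fset1; apply/idP/idP.
  move/fS_in => [y]; rewrite in_setU1 => /orP[/eqP -> ->|yA ->].
    by rewrite eqxx orbT.
  by rewrite fS_val yA.
move=> /orP[/fS_in [y yA ->]|/eqP ->]; rewrite fS_val in_setU1 ?yA ?orbT //.
by rewrite eqxx.
Qed.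

End FS.

Unset Implicit Arguments. Set Strict Implicit.

Section Core.
Variables (T : finType) (k : nat) (Ht Ht1 : {set T} -> Prop) (w : nat).
Hypothesis hk : (0 < k)%N.
Hypothesis mono : forall X, Ht X -> Ht1 X.
Hypothesis clique : forall X : {set T},
  (forall Y : {set T}, Y \subset X -> #|Y| = k -> Ht1 Y) -> (#|X| <= w)%N.
Hypothesis colorful : forall Sf : 'I_k -> {set T}, (forall j, ~ Ht1 (Sf j)) ->
  exists phi : 'I_k -> T, (forall j, phi j \in Sf j) /\ ~ Ht [set phi j | j in 'I_k].

Definition disj_seq (es : seq {set T}) := forall a b, (a < size es)%N -> (b < size es)%N ->
  a != b -> [disjoint nth set0 es a & nth set0 es b].

Lemma extract (W : {set T}) : exists es : seq {set T},
  [/\ forall E, E \in es -> [/\ E \subset W, #|E| = k & ~ Ht1 E],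
      disj_seq es & (#|W| <= w + k * size es)%N].
Proof.
move: {2}#|W| (leqnn #|W|) => m; elim: m W => [|m IH] W hW.
  exists [::]; split => //.
  by move: hW; rewrite leqn0 => /eqP ->.
case: (leqP #|W| w) => hWw.
  by exists [::]; split => //; rewrite muln0 addn0.
case: (pselect (exists Y : {set T}, [/\ Y \subset W, #|Y| = k & ~ Ht1 Y])) => [[Y [YW cY nY]]|nex]; last first.
  suff : (#|W| <= w)%N by rewrite leqNgt hWw.
  apply: clique => Y YW cY; case: (pselect (Ht1 Y)) => // nY.
  by exfalso; apply: nex; exists Y.
have cWY : #|W :\: Y| = (#|W| - k)%N.
  by rewrite cardsD (setIidPr YW) cY.
have hWY : (#|W :\: Y| <= m)%N.
  rewrite cWY leq_subLR; apply: (leq_trans hW).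
  by rewrite -add1n leq_add2r.
have [es [h1 h2 h3]] := IH _ hWY.
exists (Y :: es); split.
- move=> E; rewrite inE => /orP[/eqP -> //|/h1 [EWY cE nE]]; split => //.
  by apply: subset_trans EWY (subsetDl _ _).
- move=> [|a] [|b] //= ha hb hab.
  + have := mem_nth set0 (hb : (b < size es)%N) => /h1 [EWY _ _].
    apply: disjointWr EWY _; rewrite disjoints_subset.
    by apply/subsetP => x xY; rewrite !inE xY.
  + have := mem_nth set0 (ha : (a < size es)%N) => /h1 [EWY _ _].
    apply: disjointWl EWY _; rewrite disjoint_sym disjoints_subset.
    by apply/subsetP => x xY; rewrite !inE xY.
  + exact: h2.
- move: h3; rewrite cWY /= mulnS => h3.
  have kW : (k <= #|W|)%N by rewrite -cY subset_leq_card.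
  rewrite -(subnK kW); move: h3; rewrite -(leq_add2r k).
  by rewrite [k + _]addnC addnA.
Qed.

Definition NE (W : {set T}) : {set {set T}} :=
  [set M : {set T} | [&& M \subset W, #|M| == k & `[< ~ Ht M >]]].

Lemma NE_count (W : {set T}) (es : seq {set T}) :
  (forall E, E \in es -> E \subset W /\ ~ Ht1 E) -> disj_seq es ->
  ('C(size es, k) <= #|NE W|)%N.
Proof.
move=> hes hdis; set p := size es.
pose E (a : 'I_p) := nth set0 es a.
have Ees a : E a \in es by apply: mem_nth.
have Edis (a b : 'I_p) : a != b -> [disjoint E a & E b].
  by move=> ab; apply: hdis.
pose Rf (M : {set T}) := [set a : 'I_p | ~~ [disjoint M & E a]].
rewrite -[p]card_ord -card_draws.
apply: leq_trans (leq_imset_card Rf _); apply: subset_leq_card.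
apply/subsetP => J; rewrite inE => /eqP cJ.
have [a0 a0J] : exists a0, a0 \in J.
  by apply/set0Pn; rewrite -card_gt0 cJ.
set s := enum J.
have ss : size s = k by rewrite -cardE.
have us : uniq s := enum_uniq _.
pose aj (j : 'I_k) := nth a0 s j.
have ajJ j : aj j \in J by rewrite -mem_enum; apply: mem_nth; rewrite ss.
have aj_inj : injective aj.
  move=> j j' /eqP; rewrite /aj nth_uniq ?ss // => /eqP; exact: val_inj.
have [phi [phiS nH]] := colorful (fun j => E (aj j)) (fun j => (hes _ (Ees _)).2).
have phiE j a : phi j \in E a -> a = aj j.
  move=> pa; apply/eqP; apply: contraT => ne.
  have := Edis _ _ ne; rewrite disjoints_subset => /subsetP /(_ _ pa).
  by rewrite inE phiS.
have phi_inj : injective phi.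
  by move=> j j' e; apply: aj_inj; apply: phiE; rewrite -e.
apply/imsetP; exists [set phi j | j in 'I_k].
  rewrite inE; apply/and3P; split.
  - apply/subsetP => x /imsetP [j _ ->].
    by have [EW _] := hes _ (Ees (aj j)); apply: (subsetP EW); apply: phiS.
  - by rewrite card_imset // card_ord.
  - by apply/asboolP.
apply/setP => a; rewrite inE; apply/idP/idP => [aJ|].
  have ia : (index a s < k)%N by rewrite -ss index_mem mem_enum.
  apply/negP; rewrite disjoints_subset => /subsetP /(_ (phi (Ordinal ia))).
  have : phi (Ordinal ia) \in E a.
    have eaj : aj (Ordinal ia) = a by rewrite /aj /= nth_index // mem_enum.
    by have := phiS (Ordinal ia); rewrite eaj.
  move=> hin H; have hI : Ordinal ia \in 'I_k by [].
  by move: (H (imset_f _ hI)); rewrite inE hin.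
rewrite disjoints_subset => /subsetPn [x /imsetP [j _ ->]].
by rewrite inE negbK => /phiE ->.
Qed.
End Core.

Section DC.
Variables (T : finType) (i : nat) (Fi : {set {set T}}).
Definition Nb (A : {set T}) := [set x | (x \notin A) && ((x |: A) \in Fi)].

Lemma card_sum (D : {set T}) : #|D| = (\sum_x (x \in D))%N.
Proof. by rewrite -sum1_card big_mkcond. Qed.

Lemma sum_ind (U : finType) (P Q : pred U) :
  (\sum_(A | P A) (Q A : nat))%N = #|[set A | P A && Q A]|.
Proof.
rewrite -sum1dep_card big_mkcondr /=; apply: eq_bigr => A _.
by case: (Q A).
Qed.

Lemma dcount : (forall B, B \in Fi -> #|B| = i) -> (0 < i)%N ->
  (i * #|Fi| <= \sum_(A : {set T} | #|A| == i.-1) #|Nb A|)%N.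
Proof.
move=> hFi i0.
have -> : (i * #|Fi| = \sum_(B in Fi) #|B|)%N.
  rewrite (eq_bigr (fun _ => i)); last by move=> B /hFi.
  by rewrite sum_nat_const mulnC.
under eq_bigr => B _ do rewrite card_sum.
under [X in (_ <= X)%N]eq_bigr => A _ do rewrite card_sum.
rewrite exchange_big [X in (_ <= X)%N]exchange_big /=; apply: leq_sum => x _.
rewrite sum_ind sum_ind.
apply: (leq_trans _ (leq_imset_card (fun A => x |: A) _)).
apply: subset_leq_card; apply/subsetP => B; rewrite inE => /andP [hB xB].
apply/imsetP; exists (B :\ x); last by rewrite setD1K.
rewrite inE !inE eqxx /= setD1K // hB andbT.
have := cardsD1 x B; rewrite xB hFi // add1n => ->.
by [].
Qed.
End DC.

Section PH.
Variables (T : finType) (i k : nat) (NEA : {set T} -> {set {set T}}).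
Hypothesis hNEA : forall A M, M \in NEA A -> #|M| = k.

Lemma pigeon : exists Mst : {set T},
  (\sum_(A : {set T} | #|A| == i.-1) #|NEA A| <=
     'C(#|T|, k) * #|[set A : {set T} | (#|A| == i.-1) && (Mst \in NEA A)]|)%N.
Proof.
pose wt (M : {set T}) := #|[set A : {set T} | (#|A| == i.-1) && (M \in NEA A)]|.
exists [arg max_(M > set0) wt M].
case: arg_maxnP => // Mst _ hmax.
under eq_bigr => A _ do rewrite (@card_sum _ (NEA A)).
rewrite exchange_big /=.
under eq_bigr => M _ do rewrite sum_ind.
rewrite (bigID (fun M : {set T} => #|M| == k)) /=.
rewrite [X in (_ + X)%N]big1 ?addn0; last first.
  move=> M /negbTE nM; apply/eqP; rewrite cards_eq0; apply/eqP/setP => A.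
  by rewrite !inE; apply/negbTE; apply/andP => [[_ /hNEA /eqP]]; rewrite nM.
rewrite -card_draws -sum1dep_card big_distrl /= mul1n.
by apply: leq_sum => M _; apply: hmax.
Qed.
End PH.

Lemma bin_le_exp n m : ('C(n, m) <= n ^ m)%N.
Proof.
elim: m n => [|m IH] [|n] //.
have h := mul_bin_diag n.+1 m.
apply: (@leq_trans ((m.+1) * 'C(n.+1, m.+1))); first by rewrite leq_pmull.
rewrite -h /= expnS leq_mul2l /=; apply: leq_trans (IH n) _.
by case: (m) => // m0; rewrite leq_exp2r.
Qed.

Section BG.
Local Open Scope ring_scope.
Lemma bin_ge (R : realFieldType) p m : (0 < m)%N -> (m <= p)%N ->
  ((p%:R / m%:R) ^+ m <= ('C(p, m))%:R :> R).
Proof.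
elim: m p => [//|m IH] p _ hp.
case: m IH hp => [|m] IH hp; first by rewrite expr1 divr1 bin1.
case: p hp => [//|p] hp.
have hd := mul_bin_diag p.+1 m.+1; rewrite /= in hd.
have m0 : (0 : R) < m.+1%:R by rewrite ltr0n.
have m1 : (0 : R) < m.+2%:R by rewrite ltr0n.
have e : ('C(p.+1, m.+2))%:R = (p.+1%:R / m.+2%:R) * ('C(p, m.+1))%:R :> R.
  apply: (mulfI (lt0r_neq0 m1)); rewrite mulrA mulrCA divff ?lt0r_neq0 // mulr1.
  by rewrite -!natrM -hd.
rewrite e exprS; apply: ler_wpM2l; first by rewrite divr_ge0 ?ler0n.
apply: le_trans (IH p isT hp).
apply: lerXn2r; rewrite ?nnegrE ?divr_ge0 ?ler0n //.
rewrite ler_pdivrMr // mulrAC ler_pdivlMr // -!natrM ler_nat.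
nia.
Qed.

End BG.

Section Core2.
Variables (T : finType) (k w : nat) (Ht Ht1 : {set T} -> Prop).
Hypothesis hk : (0 < k)%N.
Hypothesis mono : forall X, Ht X -> Ht1 X.
Hypothesis clique : forall X : {set T},
  (forall Y : {set T}, Y \subset X -> #|Y| = k -> Ht1 Y) -> (#|X| <= w)%N.
Hypothesis colorful : forall Sf : 'I_k -> {set T}, (forall j, ~ Ht1 (Sf j)) ->
  exists phi : 'I_k -> T, (forall j, phi j \in Sf j) /\ ~ Ht [set phi j | j in 'I_k].

Lemma Hper (W : {set T}) : exists p, [/\ (#|W| <= w + k * p)%N,
   ('C(p, k) <= #|NE T k Ht W|)%N & ((0 < p)%N -> (0 < #|NE T k Ht W|)%N)].
Proof.
have [es [h1 h2 h3]] := @extract T k Ht1 w hk clique W.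
exists (size es); split => //.
  apply: (@NE_count T k Ht Ht1 hk colorful W es _ h2).
  by move=> E /h1 [? _ ?].
case: es h1 {h2 h3} => // E es h1 _.
have [EW cE nE] := h1 E (mem_head _ _).
apply/card_gt0P; exists E; rewrite inE EW cE eqxx /=.
by apply/asboolP => /mono.
Qed.

Local Open Scope ring_scope.
Variables (R : realFieldType) (i : nat) (Fi : {set {set T}}) (c : R).
Hypothesis hi : (0 < i <= k)%N.
Hypothesis hn : (12 * k <= #|T|)%N.
Hypothesis hc : 0 < c < 1.
Hypothesis hw : w%:R <= c * #|T|%:R / 2.
Hypothesis hFi : forall B, B \in Fi -> #|B| = i.
Hypothesis hFc : c * ('C(#|T|, i))%:R <= (#|Fi|)%:R.

Theorem core : exists (M : {set T}) (CM : {set {set T}}),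
  [/\ #|M| = k, ~ Ht M, (forall A, A \in CM -> #|A| = i.-1 /\ M \subset Nb T Fi A) &
      (c / (12 * (k ^ 2)%:R)) ^+ k * ('C(#|T|, i.-1))%:R <= (#|CM|)%:R].
Proof.
set n := #|T|.
pose NEA A := NE T k Ht (Nb T Fi A).
have hNEA : forall A M, M \in NEA A -> #|M| = k.
  by move=> A M; rewrite inE => /and3P [_ /eqP -> _].
have [Mst hp] := @pigeon T i k NEA hNEA.
set CM := [set A : {set T} | (#|A| == i.-1) && (Mst \in NEA A)] in hp.
set sq := (\sum_(A : {set T} | #|A| == i.-1) #|NEA A|)%N in hp.
set sa := (\sum_(A : {set T} | #|A| == i.-1) #|Nb T Fi A|)%N.
set C1 := 'C(n, i.-1).
have C1pos : (0 < C1)%N by rewrite bin_gt0; lia.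
have npos : (0 < n)%N by lia.
have i0 : (0 < i)%N by case/andP: hi.
have hsa : c * (n - i.-1)%:R * C1%:R <= sa%:R.
  have dc := @dcount T i Fi hFi i0.
  have e := mul_bin_left n i.-1; rewrite prednK // in e.
  rewrite -mulrA -natrM -e natrM mulrCA.
  apply: le_trans (_ : i%:R * #|Fi|%:R <= _).
    by apply: ler_wpM2l; rewrite ?ler0n.
  by rewrite -natrM ler_nat.
suff [wpos hδ] : (0 < #|CM|)%N /\ (c / (12 * (k ^ 2)%:R)) ^+ k * C1%:R <= (#|CM|)%:R.
  have [A] := card_gt0P wpos; rewrite inE => /andP [/eqP cA].
  rewrite inE => /and3P [MN /eqP cM /asboolP nH].
  exists Mst, CM; split => // B; rewrite inE => /andP [/eqP cB].
  by rewrite inE => /and3P [].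
set wt := #|CM|.
set K : R := k%:R.
have Kpos : 0 < K by rewrite ltr0n.
have eK2 : (k ^ 2)%:R = K ^+ 2 by rewrite natrX.
set y := c * n%:R / (12 * (k ^ 2)%:R).
have cpos : 0 < c by case/andP: hc.
have npos' : (0 : R) < n%:R by rewrite ltr0n.
have ypos : 0 < y by rewrite /y eK2 divr_gt0 ?mulr_gt0 ?exprn_gt0 ?ltr0n.
have e3y : 3 * y * K ^+ 2 = c * n%:R / 4.
  by rewrite /y eK2; field; rewrite lt0r_neq0.
have e3y' : c * n%:R = 12 * (y * K ^+ 2).
  by rewrite /y eK2; field; rewrite lt0r_neq0.
have hsqwt : sq%:R <= n%:R ^+ k * wt%:R :> R.
  rewrite -natrX -natrM ler_nat; apply: leq_trans hp _.
  by rewrite leq_mul2r bin_le_exp orbT.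
have key : (c / (12 * (k ^ 2)%:R)) ^+ k * n%:R ^+ k = y ^+ k.
  by rewrite -exprMn mulrAC.
have dpos : 0 <= (c / (12 * (k ^ 2)%:R)) ^+ k.
  by rewrite exprn_ge0 // divr_ge0 ?ltW // eK2 mulr_gt0 ?ltr0n ?exprn_gt0.
suff hδ : (c / (12 * (k ^ 2)%:R)) ^+ k * C1%:R <= wt%:R.
  split => //; rewrite -(ltr0n R); apply: lt_le_trans hδ.
  rewrite mulr_gt0 ?ltr0n // exprn_gt0 // divr_gt0 // eK2 mulr_gt0 ?exprn_gt0 //.
have ex x : x ^+ k = x * x ^+ k.-1 :> R by rewrite -exprS prednK.
have nB : (n - i.-1)%:R = n%:R - i.-1%:R :> R by rewrite natrB //; lia.
have hni : (12 * i <= n)%N.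
  by apply: leq_trans hn; rewrite leq_mul2l; case/andP: hi => _ ->.
case: (ltrP (3 * y) 1) => hy.
  have [A /andP [PA wa]] : exists A : {set T}, (#|A| == i.-1) && (w < #|Nb T Fi A|)%N.
    apply/existsP; apply: contraT; rewrite negb_exists => /forallP hall.
    have : (sa <= C1 * w)%N.
      rewrite /C1 -card_draws.
      apply: (@leq_trans (\sum_(A : {set T} | #|A| == i.-1) w)%N).
        by apply: leq_sum => A hA; move: (hall A); rewrite hA /= -leqNgt.
      by rewrite sum_nat_const cardsE.
    rewrite -(ler_nat R) natrM => hsw.
    have : c * (n - i.-1)%:R * C1%:R <= C1%:R * (c * n%:R / 2).
      apply: le_trans hsa (le_trans hsw _).
      by apply: ler_wpM2l; rewrite ?ler0n.
    rewrite nB.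
    have : (12 * i)%:R <= n%:R :> R by rewrite ler_nat.
    have : (i.-1)%:R <= i%:R :> R by rewrite ler_nat leq_pred.
    have C1p : (0 : R) < C1%:R by rewrite ltr0n.
    rewrite natrM => h1 h2.
    rewrite [C1%:R * _]mulrC ler_pM2r // -[c * n%:R / 2]mulrA ler_pM2l // => h3.
    lra.
  have [p [hp1 hp2 hp3]] := Hper (Nb T Fi A).
  have p0 : (0 < p)%N.
    rewrite lt0n; apply/negP => /eqP p0; move: hp1 wa; rewrite p0; lia.
  have sq0 : (0 < sq)%N.
    rewrite /sq (bigD1 A) //=; apply: leq_trans (hp3 p0) (leq_addr _ _).
  have wt0 : (0 < wt)%N.
    rewrite lt0n; apply/negP => /eqP w0; move: hp; rewrite -/wt w0 muln0.
    by rewrite leqNgt sq0.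
  apply: (le_trans (y := 1)); last by rewrite ler1n.
  have C1n : (C1 <= n ^ k)%N.
    apply: leq_trans (bin_le_exp _ _) _; apply: leq_pexp2l => //.
    case/andP: hi => _; lia.
  apply: (le_trans (y := (c / (12 * (k ^ 2)%:R)) ^+ k * n%:R ^+ k)).
    by apply: ler_wpM2l => //; rewrite -natrX ler_nat.
  rewrite key; apply: exprn_ile1; first exact: ltW.
  lra.
pose aR (A : {set T}) : R := (#|Nb T Fi A|)%:R.
set X := y * K ^+ 2.
have Xpos : 0 < X by rewrite mulr_gt0 ?exprn_gt0.
pose hA (A : {set T}) := if 3 * X <= aR A - w%:R then aR A - w%:R else 0.
have K2pos : 0 < K ^+ 2 by rewrite exprn_gt0.
have claim A : (3 * y) ^+ k.-1 / K ^+ 2 * hA A <= (#|NEA A|)%:R.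
  rewrite /hA; case: ifP => hcase; last by rewrite mulr0 ler0n.
  have [p [hp1 hp2 _]] := Hper (Nb T Fi A).
  have hp1' : aR A - w%:R <= K * p%:R.
    by move: hp1; rewrite -(ler_nat R) natrD natrM /aR -/K => ?; lra.
  have hKK : K * K <= K * p%:R.
    apply: le_trans hp1'; apply: le_trans hcase; rewrite /X -expr2 mulrA.
    by apply: ler_peMl => //; rewrite ltW.
  have kp : (k <= p)%N by rewrite -(ler_nat R) -(ler_pM2l Kpos).
  apply: le_trans (_ : (p%:R / K) ^+ k <= _); last first.
    by apply: le_trans (bin_ge R p k hk kp) _; rewrite ler_nat.
  have e1 : p%:R / K = (K * p%:R) / K ^+ 2.
    by field; rewrite lt0r_neq0.
  have h1 : (aR A - w%:R) / K ^+ 2 <= p%:R / K.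
    by rewrite e1 ler_wpM2r // invr_ge0 ltW.
  have h2 : 3 * y <= (aR A - w%:R) / K ^+ 2.
    rewrite ler_pdivlMr // -mulrA; exact: hcase.
  have y3 : 0 <= 3 * y by rewrite mulr_ge0 // ltW.
  have -> : (3 * y) ^+ k.-1 / K ^+ 2 * (aR A - w%:R) =
            ((aR A - w%:R) / K ^+ 2) * (3 * y) ^+ k.-1 by ring.
  rewrite ex; apply: ler_pM.
  - by apply: le_trans h2.
  - by rewrite exprn_ge0.
  - exact: h1.
  - by apply: lerXn2r; rewrite ?nnegrE //; apply: le_trans h1; apply: le_trans h2.
have hsq1 : \sum_(A : {set T} | #|A| == i.-1) ((3 * y) ^+ k.-1 / K ^+ 2 * hA A) <= sq%:R.
  by rewrite /sq natr_sum; apply: ler_sum => A _; apply: claim.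
have hsum : \sum_(A : {set T} | #|A| == i.-1) (aR A - (w%:R + 3 * X)) <=
            \sum_(A : {set T} | #|A| == i.-1) hA A.
  apply: ler_sum => A _; rewrite /hA; case: ifP => hc'.
    by rewrite opprD addrA lerBlDr lerDl mulr_ge0 // ltW.
  move/negbT: hc'; rewrite -ltNge => hc'; lra.
have esum : \sum_(A : {set T} | #|A| == i.-1) (aR A - (w%:R + 3 * X)) =
            sa%:R - C1%:R * (w%:R + 3 * X).
  rewrite sumrB /sa natr_sum sumr_const -[(w%:R + 3 * X) *+ _]mulr_natl.
  congr (_ - _%:R * _); rewrite /C1 -card_draws; apply: eq_card => A; rewrite !inE.
  done.
have cn : c * n%:R = 12 * X.
  by rewrite /X e3y'.
rewrite nB in hsa.
have i1 : 12 * i.-1%:R <= n%:R :> R.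
  rewrite -natrM ler_nat; apply: leq_trans hni; rewrite leq_mul2l leq_pred orbT.
  done.
have ci : c * i.-1%:R <= X.
  have : c * (12 * i.-1%:R) <= c * n%:R by rewrite ler_wpM2l // ltW.
  rewrite mulrCA cn; lra.
have D : 2 * X <= c * (n%:R - i.-1%:R) - (w%:R + 3 * X).
  move: hw; rewrite mulrBr cn; lra.
have C1p : (0 : R) <= C1%:R by rewrite ler0n.
have hlow : C1%:R * (2 * X) <= sa%:R - C1%:R * (w%:R + 3 * X).
  apply: le_trans (_ : C1%:R * (c * (n%:R - i.-1%:R) - (w%:R + 3 * X)) <= _).
    exact: ler_wpM2l.
  rewrite mulrBr [C1%:R * (c * _)]mulrC; lra.
have y3 : 0 <= 3 * y by rewrite mulr_ge0 // ltW.
have hsq : (3 * y) ^+ k.-1 / K ^+ 2 * (C1%:R * (2 * X)) <= sq%:R.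
  apply: le_trans hsq1; rewrite -mulr_sumr; apply: ler_wpM2l.
    by rewrite divr_ge0 ?exprn_ge0 // ltW.
  by apply: le_trans hlow _; rewrite -esum.
have e2 : (3 * y) ^+ k.-1 / K ^+ 2 * (C1%:R * (2 * X)) =
          (y * C1%:R) * (2 * (3 * y) ^+ k.-1).
  by rewrite /X; field; rewrite lt0r_neq0.
have hyk : y ^+ k * C1%:R <= sq%:R.
  apply: le_trans hsq; rewrite e2 ex.
  have -> : y * y ^+ k.-1 * C1%:R = (y * C1%:R) * y ^+ k.-1 by ring.
  apply: ler_wpM2l; first by rewrite mulr_ge0 // ltW.
  have hpow : y ^+ k.-1 <= (3 * y) ^+ k.-1.
    by apply: lerXn2r; rewrite ?nnegrE ?ltW //; lra.
  have : 0 <= (3 * y) ^+ k.-1 by rewrite exprn_ge0.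
  lra.
have nk : (0 : R) < n%:R ^+ k by rewrite exprn_gt0.
rewrite -(ler_pM2r nk) mulrAC key [wt%:R * _]mulrC.
by apply: le_trans hyk hsqwt.
Qed.
End Core2.
Local Open Scope fset_scope.
Local Open Scope ring_scope.

Theorem lemma2 (k : nat) :
  exists N : nat,
  forall (R : realFieldType) (V : choiceType) (H : int -> hypergraph V),
    hyp_chain H -> colorful_helly H k ->
  forall (S : {fset V}) (n : nat), #|` S| = n -> (N <= n)%N ->
  forall (t : int) (c : R), 0 < c < 1 ->
    (omega k (H (t + 1)) S)%:R <= c * n%:R / 2 ->
  forall (i : nat), (0 < i <= k)%N ->
  forall Fi : {fset {fset V}},
    (forall A, A \in Fi -> in_binom S i A) ->
    c * ('C(n, i))%:R <= (#|` Fi|)%:R ->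
  exists (Fim1 : {fset {fset V}}) (M : {fset V}),
    (forall A, A \in Fim1 -> in_binom S i.-1 A) /\
    in_binom S k M /\ ~ H t M /\
    (c / (12 * (k ^ 2)%:R)) ^+ k * ('C(n, i.-1))%:R <= (#|` Fim1|)%:R /\
    (forall A v, A \in Fim1 -> v \in M -> A `|` [fset v] \in Fi).
Proof.
exists (12 * k)%N.
move=> R V H [hdown hmono] hCH S n hSn hNn t c hc hom i hi Fi hFiS hFc.
have hk : (0 < k)%N by case/andP: hi => i0 ik; apply: leq_trans ik.
have nT : #|{: S}| = n by rewrite -cardfE.
pose Ht (X : {set S}) := H t (fS X).
pose Ht1 (X : {set S}) := H (t + 1)%R (fS X).
pose Fi' := [set B : {set S} | fS B \in Fi].
have mono X : Ht X -> Ht1 X by apply: hmono.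
have clique : forall X : {set S},
    (forall Y : {set S}, Y \subset X -> #|Y| = k -> Ht1 Y) ->
    (#|X| <= omega k (H (t + 1)%R) S)%N.
  move=> X hX; rewrite -card_fS /omega.
  apply: (bigmaxn_sup_seq (fS X)) => //.
    by rewrite fpowersetE fS_sub.
  apply/asboolP => A [AX cA].
  have AS : A `<=` S by apply: fsubset_trans AX (fS_sub _).
  rewrite -(fSgS AS); apply: hX; first exact: gS_sub.
  by rewrite card_gS.
have colorful : forall Sf : 'I_k -> {set S}, (forall j, ~ Ht1 (Sf j)) ->
    exists phi : 'I_k -> S, (forall j, phi j \in Sf j) /\ ~ Ht [set phi j | j in 'I_k].
  move=> Sf nS.
  case: (pselect (exists phi : 'I_k -> S, (forall j, phi j \in Sf j) /\ ~ Ht [set phi j | j in 'I_k])) => // nex.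
  exfalso.
  suff hall : forall F, colorful_sel (fun j => fS (Sf j)) F -> H t F.
    by have [j hj] := hCH _ t hall; apply: (nS j).
  move=> F [phiV [hphi ->]].
  have [phi hphi'] : exists phi : 'I_k -> S, forall j, phi j \in Sf j /\ phiV j = val (phi j).
    have : forall j, exists x : S, x \in Sf j /\ phiV j = val x.
      by move=> j; have [x xS ->] := fS_in (hphi j); exists x.
    by move/fin_all_exists.
  case: (pselect (Ht [set phi j | j in 'I_k])) => hH; last first.
    by exfalso; apply: nex; exists phi; split => // j; case: (hphi' j).
  suff <- : fS [set phi j | j in 'I_k] = [fset phiV i0 | i0 in 'I_k] by [].
  apply/fsetP => v; apply/idP/imfsetP => [/fS_in [x /imsetP [j _ ->] ->]|[j _ ->]].
    by exists j => //; case: (hphi' j).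
  by case: (hphi' j) => _ ->; rewrite fS_val; apply: imset_f.
have hn : (12 * k <= #|{: S}|)%N by rewrite nT.
have hw : (omega k (H (t + 1)%R) S)%:R <= c * #|{: S}|%:R / 2 by rewrite nT.
have hFi : forall B, B \in Fi' -> #|B| = i.
  by move=> B; rewrite inE => /hFiS [_]; rewrite card_fS.
have hFc' : c * ('C(#|{: S}|, i))%:R <= (#|Fi'|)%:R.
  rewrite nT; apply: le_trans hFc _; rewrite ler_nat.
  rewrite cardE -(size_map (@gS V S)); apply: uniq_leq_size.
    rewrite map_inj_in_uniq ?fset_uniq // => B B' /hFiS [BS _] /hFiS [B'S _] e.
    by rewrite -(fSgS BS) -(fSgS B'S) e.
  move=> X /mapP [B BFi ->]; have [BS _] := hFiS _ BFi.
  by rewrite mem_enum inE fSgS.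
have [M [CM [cM nHM hCM hδ]]] :=
  @core S k _ Ht Ht1 hk mono clique colorful R i Fi' c hi hn hc hw hFi hFc'.
exists [fset fS A | A in CM], (fS M); split; [|split; [|split; [|split]]].
- move=> A' /imfsetP [A /= ACM ->]; split; first exact: fS_sub.
  by rewrite card_fS; case: (hCM A ACM).
- by split; [apply: fS_sub | rewrite card_fS].
- exact: nHM.
- rewrite -nT; apply: le_trans hδ _; rewrite ler_nat card_imfset; last exact: fS_inj.
  by rewrite cardE.
- move=> A' v /imfsetP [A /= ACM ->] /fS_in [x xM ->].
  have [_ /subsetP /(_ x xM)] := hCM A ACM.
  by rewrite inE => /andP [_]; rewrite inE fS_setU1.
Qed.
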